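(* Every compact metric space, viewed as a structure in the metric signature, has Scott rank at most $\omega$.
   Context: A metric space $(X,d)$ is viewed as a first-order structure in the signature $\{R_q : q\in\mathbb{Q}^+\}$ of binary relation symbols, where $R_q(x,y)$ holds iff $d(x,y)<q$. For a structure $M$ and finite tuples $\bar a,\bar b$ of the same length from $M$, define $\bar a\equiv_\alpha\bar b$ by induction on ordinals $\alpha$: $\bar a\equiv_0\bar b$ iff $\bar a,\bar b$ have the same quantifier-free type; for limit $\alpha$, $\bar a\equiv_\alpha\bar b$ iff $\bar a\equiv_\beta\bar b$ for all $\beta<\alpha$; $\bar a\equiv_{\alpha+1}\bar b$ iff for every $x\in M$ there is $y\in M$ with $\bar a x\equiv_\alpha\bar b y$, and for every $y\in M$ there is $x\in M$ with $\bar a x\equiv_\alpha \bar b y$. The Scott rank of $M$ is the least ordinal $\alpha$ such that for all finite tuples $\bar a,\bar b$ from $M$, $\bar a\equiv_\alpha\bar b$ implies $\bar a\equiv_{\alpha+1}\bar b$. *)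

(* Defs.v *)
From Stdlib Require Import Reals QArith List.
Open Scope R_scope.

Definition is_metric {X : Type} (d : X -> X -> R) : Prop :=
  (forall x y, 0 <= d x y) /\
  (forall x y, d x y = 0 <-> x = y) /\
  (forall x y, d x y = d y x) /\
  (forall x y z, d x z <= d x y + d y z).

Definition metric_open {X : Type} (d : X -> X -> R) (U : X -> Prop) : Prop :=
  forall x, U x -> exists eps, 0 < eps /\ forall y, d x y < eps -> U y.

Definition metric_compact {X : Type} (d : X -> X -> R) : Prop :=
  forall (I : Type) (U : I -> X -> Prop),
    (forall i, metric_open d (U i)) ->
    (forall x, exists i, U i x) ->
    exists l : list I, forall x, exists i, In i l /\ U i x.

(** A tuple of length k is represented by (k, a) with a : nat -> X; only the
    entries a 0, ..., a (k-1) matter. *)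
Definition snoc {X : Type} (k : nat) (a : nat -> X) (x : X) : nat -> X :=
  fun i => if Nat.eqb i k then x else a i.

(** Same quantifier-free type in the signature {R_q : q in Q^+} (with equality),
    where R_q(x,y) iff d x y < q. *)
Definition same_qftype {X : Type} (d : X -> X -> R) (k : nat) (a b : nat -> X) : Prop :=
  forall i j, (i < k)%nat -> (j < k)%nat ->
    (a i = a j <-> b i = b j) /\
    (forall q : Q, (0 < q)%Q -> (d (a i) (a j) < Q2R q <-> d (b i) (b j) < Q2R q)).

Fixpoint bf_equiv {X : Type} (d : X -> X -> R) (m : nat) (k : nat) (a b : nat -> X) : Prop :=
  match m with
  | O => same_qftype d k a b
  | S m' =>
      (forall x, exists y, bf_equiv d m' (S k) (snoc k a x) (snoc k b y)) /\
      (forall y, exists x, bf_equiv d m' (S k) (snoc k a x) (snoc k b y))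
  end.

Definition bf_equiv_omega {X : Type} (d : X -> X -> R) (k : nat) (a b : nat -> X) : Prop :=
  forall m, bf_equiv d m k a b.

Definition bf_equiv_omega1 {X : Type} (d : X -> X -> R) (k : nat) (a b : nat -> X) : Prop :=
  (forall x, exists y, bf_equiv_omega d (S k) (snoc k a x) (snoc k b y)) /\
  (forall y, exists x, bf_equiv_omega d (S k) (snoc k a x) (snoc k b y)).

(** Scott rank <= ω: the least α with (≡_α ⊆ ≡_{α+1} on all tuples) is <= ω,
    i.e. some α in {0,1,2,...,ω} has this property. *)
Definition scott_rank_le_omega {X : Type} (d : X -> X -> R) : Prop :=
  (exists m : nat, forall k (a b : nat -> X),
      bf_equiv d m k a b -> bf_equiv d (S m) k a b) \/
  (forall k (a b : nat -> X), bf_equiv_omega d k a b -> bf_equiv_omega1 d k a b).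

(* Main.v *)
Require Import Defs.
From Stdlib Require Import Reals QArith Qreals Lra Lia ZArith List Classical.
Open Scope R_scope.

Lemma Q_between (x y : R) : 0 <= x -> x < y -> exists q : Q, (0 < q)%Q /\ x < Q2R q < y.
Proof.
  intros Hx Hxy.
  set (n := up (1 / (y - x))).
  destruct (archimed (1/(y-x))) as [Hn1 _].
  assert (Hpos : 0 < 1/(y-x)) by (apply Rdiv_lt_0_compat; lra).
  assert (Hn : (0 < n)%Z) by (apply lt_0_IZR; fold n in Hn1; lra).
  set (m := up (x * IZR n)).
  destruct (archimed (x * IZR n)) as [Hm1 Hm2]. fold m in Hm1, Hm2.
  assert (HnR : 0 < IZR n) by (apply IZR_lt; lia).
  assert (Hq : Q2R (m # Z.to_pos n) = IZR m / IZR n).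
  { unfold Q2R; simpl. rewrite Z2Pos.id by lia. reflexivity. }
  assert (Hbound : x < IZR m / IZR n < y).
  { split.
    - apply (Rmult_lt_reg_r (IZR n)); auto. field_simplify; lra.
    - apply (Rmult_lt_reg_r (IZR n)); auto. unfold Rdiv. rewrite Rmult_assoc, Rinv_l, Rmult_1_r by lra.
      fold n in Hn1.
      assert (1 < IZR n * (y - x)).
      { apply (Rmult_lt_reg_r (/ (y - x))). apply Rinv_0_lt_compat; lra.
        rewrite Rmult_assoc, Rinv_r, Rmult_1_r by lra. unfold Rdiv in Hn1. lra. }
      nra. }
  exists (m # Z.to_pos n). rewrite Hq. split; [|exact Hbound].
  apply Rlt_Qlt. rewrite Hq. unfold Q2R; simpl. lra.
Qed.

Section S.
Context {X : Type} (d : X -> X -> R) (Hm : is_metric d) (Hcomp : metric_compact d).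

Lemma d_nonneg x y : 0 <= d x y. Proof. apply Hm. Qed.
Lemma d_refl x : d x x = 0. Proof. apply Hm. reflexivity. Qed.
Lemma d_eq x y : d x y = 0 -> x = y. Proof. apply Hm. Qed.
Lemma d_sym x y : d x y = d y x. Proof. apply Hm. Qed.
Lemma d_tri x y z : d x z <= d x y + d y z. Proof. apply Hm. Qed.

Lemma qf_dist k a b : same_qftype d k a b ->
  forall i j, (i < k)%nat -> (j < k)%nat -> d (a i) (a j) = d (b i) (b j).
Proof.
  intros H i j Hi Hj. destruct (H i j Hi Hj) as [_ Hq].
  destruct (Rtotal_order (d (a i) (a j)) (d (b i) (b j))) as [Hl|[He|Hl]]; auto.
  - destruct (Q_between _ _ (d_nonneg _ _) Hl) as [q [q0 [q1 q2]]].
    apply (Hq q q0) in q1. lra.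
  - destruct (Q_between _ _ (d_nonneg _ _) Hl) as [q [q0 [q1 q2]]].
    apply (Hq q q0) in q1. lra.
Qed.

Lemma dist_qf k a b : (forall i j, (i < k)%nat -> (j < k)%nat -> d (a i) (a j) = d (b i) (b j)) ->
  same_qftype d k a b.
Proof.
  intros H i j Hi Hj. specialize (H i j Hi Hj). split.
  - split; intro E.
    + apply d_eq. rewrite <- H, E. apply d_refl.
    + apply d_eq. rewrite H, E. apply d_refl.
  - intros q _. rewrite H. tauto.
Qed.

Definition close k (a a' : nat -> X) e := forall i, (i < k)%nat -> d (a i) (a' i) < e.
Definition approx n k a b := forall e, 0 < e -> exists a' b',
  close k a a' e /\ close k b b' e /\ bf_equiv d n k a' b'.
Definition Closed n := forall k a b, approx n k a b -> bf_equiv d n k a b.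

Lemma le_eps x y : (forall e, 0 < e -> x < y + e) -> x <= y.
Proof. intros H. destruct (Rle_lt_dec x y); auto. specialize (H (x - y)). lra. Qed.

Lemma closed0 : Closed 0.
Proof.
  intros k a b Ha. apply dist_qf. intros i j Hi Hj.
  assert (forall a b, approx 0 k a b -> d (a i) (a j) <= d (b i) (b j)).
  { clear a b Ha. intros a b Ha. apply le_eps. intros e He.
    destruct (Ha (e/4)) as [a' [b' [Ca [Cb Hab]]]]; [lra|].
    simpl in Hab. pose proof (qf_dist _ _ _ Hab i j Hi Hj) as E.
    pose proof (Ca i Hi). pose proof (Ca j Hj). pose proof (Cb i Hi). pose proof (Cb j Hj).
    pose proof (d_tri (a i) (a' i) (a j)). pose proof (d_tri (a' i) (a' j) (a j)).
    pose proof (d_tri (b' i) (b i) (b' j)). pose proof (d_tri (b i) (b j) (b' j)).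
    rewrite (d_sym (a' j) (a j)) in *. rewrite (d_sym (b' i) (b i)) in *. lra. }
  apply Rle_antisym; apply H; auto.
  intros e He. destruct (Ha e He) as [a' [b' [Ca [Cb Hab]]]]. exists b', a'.
  split; [auto|split; [auto|]]. simpl in *. apply dist_qf. intros. symmetry. apply (qf_dist k); auto.
Qed.

Lemma bf_sym n : forall k a b, bf_equiv d n k a b -> bf_equiv d n k b a.
Proof.
  induction n; intros k a b H; simpl in *.
  - apply dist_qf. intros. symmetry. apply (qf_dist k); auto.
  - destruct H as [H1 H2]. split.
    + intros x. destruct (H2 x) as [y Hy]. exists y. auto.
    + intros y. destruct (H1 y) as [x Hx]. exists x. auto.
Qed.

Lemma snoc_lt k (a : nat -> X) x i : (i < k)%nat -> snoc k a x i = a i.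
Proof. intros. unfold snoc. destruct (Nat.eqb_spec i k); [lia|auto]. Qed.
Lemma snoc_k k (a : nat -> X) x : snoc k a x k = x.
Proof. unfold snoc. rewrite Nat.eqb_refl. auto. Qed.

Lemma bf_mono n : forall k a b, bf_equiv d (S n) k a b -> bf_equiv d n k a b.
Proof.
  induction n; intros k a b H.
  - destruct H as [H1 _]. destruct (H1 (a 0%nat)) as [y Hy]. simpl in Hy.
    apply dist_qf. intros i j Hi Hj.
    pose proof (qf_dist _ _ _ Hy i j ltac:(lia) ltac:(lia)).
    rewrite !snoc_lt in H by auto. auto.
  - destruct H as [H1 H2]. split.
    + intros x. destruct (H1 x) as [y Hy]. exists y. apply IHn. auto.
    + intros y. destruct (H2 y) as [x Hx]. exists x. apply IHn. auto.
Qed.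

Lemma bf_mono_le n m : (n <= m)%nat -> forall k a b, bf_equiv d m k a b -> bf_equiv d n k a b.
Proof. induction 1; auto. intros. apply IHle. apply bf_mono. auto. Qed.

Lemma ball_open y e : metric_open d (fun z => d y z < e).
Proof.
  intros z Hz. exists (e - d y z). split; [lra|]. intros w Hw.
  pose proof (d_tri y z w). lra.
Qed.

Lemma not_closed_ball n k a b : Closed n -> ~ bf_equiv d n k a b ->
  exists e, 0 < e /\ forall a' b', close k a a' e -> close k b b' e -> ~ bf_equiv d n k a' b'.
Proof.
  intros Hc Hn. assert (~ approx n k a b) by (intro; apply Hn, Hc; auto).
  apply not_all_ex_not in H. destruct H as [e He]. exists e.
  apply imply_to_and in He. destruct He as [He1 He2]. split; auto.
  intros a' b' Ca Cb Hab. apply He2. exists a', b'. auto.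
Qed.

Fixpoint minpos (l : list (X * R)) : R :=
  match l with
  | nil => 1
  | p :: l' => Rmin (if Rlt_dec 0 (snd p) then snd p / 2 else 1) (minpos l')
  end.

Lemma minpos_pos l : 0 < minpos l.
Proof.
  induction l; simpl; [lra|]. apply Rmin_glb_lt; auto.
  destruct (Rlt_dec 0 (snd a)); lra.
Qed.

Lemma minpos_le l p : In p l -> 0 < snd p -> minpos l <= snd p / 2.
Proof.
  induction l; simpl; [tauto|]. intros [E|H] Hp.
  - subst. destruct (Rlt_dec 0 (snd p)); [|lra]. apply Rmin_l.
  - eapply Rle_trans; [apply Rmin_r|]. auto.
Qed.

Lemma step_forth n (Hc : Closed n) k a b : approx (S n) k a b ->
  forall x, exists y, bf_equiv d n (S k) (snoc k a x) (snoc k b y).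
Proof.
  intros Ha x. apply NNPP. intro Hno.
  assert (Hbad : forall y, ~ bf_equiv d n (S k) (snoc k a x) (snoc k b y))
    by (intros y Hy; apply Hno; eauto).
  set (bad := fun (p : X * R) => forall a' b', close (S k) (snoc k a x) a' (snd p) ->
     close (S k) (snoc k b (fst p)) b' (snd p) -> ~ bf_equiv d n (S k) a' b').
  set (U := fun (p : X * R) z => 0 < snd p /\ bad p /\ d (fst p) z < snd p / 2).
  assert (Hopen : forall p, metric_open d (U p)).
  { intros p z [H1 [H2 H3]]. destruct (ball_open (fst p) (snd p / 2) z H3) as [e [He Hb]].
    exists e. split; auto. intros w Hw. repeat split; auto. }
  assert (Hcov : forall z, exists p, U p z).
  { intros z. destruct (not_closed_ball _ _ _ _ Hc (Hbad z)) as [e [He Hb]].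
    exists (z, e). unfold U, bad; simpl. rewrite d_refl. repeat split; auto; lra. }
  destruct (Hcomp _ U Hopen Hcov) as [l Hl].
  destruct (Ha (minpos l) (minpos_pos l)) as [a' [b' [Ca [Cb Hab]]]].
  destruct Hab as [H1 _]. destruct (H1 x) as [y' Hy'].
  destruct (Hl y') as [p [Hin [Hp0 [Hpb Hpd]]]].
  pose proof (minpos_le l p Hin Hp0).
  apply (Hpb (snoc k a' x) (snoc k b' y')); auto.
  - intros i Hi. destruct (Nat.eq_dec i k).
    + subst. rewrite !snoc_k, d_refl. auto.
    + rewrite !snoc_lt by lia. pose proof (Ca i ltac:(lia)). lra.
  - intros i Hi. destruct (Nat.eq_dec i k).
    + subst. rewrite !snoc_k. lra.
    + rewrite !snoc_lt by lia. pose proof (Cb i ltac:(lia)). lra.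
Qed.

Lemma approx_sym n k a b : approx n k a b -> approx n k b a.
Proof.
  intros H e He. destruct (H e He) as [a' [b' [Ca [Cb Hab]]]].
  exists b', a'. split; [auto|split; [auto|]]. apply bf_sym; auto.
Qed.

Lemma closed_S n : Closed n -> Closed (S n).
Proof.
  intros Hc k a b Ha. split.
  - apply step_forth; auto.
  - intros y. destruct (step_forth n Hc k b a (approx_sym _ _ _ _ Ha) y) as [x Hx].
    exists x. apply bf_sym; auto.
Qed.

Lemma closed_all n : Closed n.
Proof. induction n. apply closed0. apply closed_S; auto. Qed.

Fixpoint maxm (l : list (X * nat * R)%type) : nat :=
  match l with nil => 0%nat | p :: l' => Nat.max (snd (fst p)) (maxm l') end.

Lemma maxm_le l p : In p l -> (snd (fst p) <= maxm l)%nat.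
Proof. induction l; simpl; [tauto|]. intros [E|H]; [subst; lia|]. specialize (IHl H); lia. Qed.

Lemma omega_forth k a b : bf_equiv_omega d k a b ->
  forall x, exists y, bf_equiv_omega d (S k) (snoc k a x) (snoc k b y).
Proof.
  intros Ha x. apply NNPP. intro Hno.
  assert (Hbad : forall y, exists m, ~ bf_equiv d m (S k) (snoc k a x) (snoc k b y)).
  { intros y. apply not_all_ex_not. intro Hy. apply Hno. exists y. exact Hy. }
  set (U := fun (p : (X * nat * R)%type) z => 0 < snd p /\ (forall y', d (fst (fst p)) y' < snd p -> ~ bf_equiv d (snd (fst p)) (S k) (snoc k a x) (snoc k b y'))
     /\ d (fst (fst p)) z < snd p).
  assert (Hopen : forall p, metric_open d (U p)).
  { intros p z [H1 [H2 H3]]. destruct (ball_open (fst (fst p)) (snd p) z H3) as [e [He Hb]].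
    exists e. split; auto. intros w Hw. repeat split; auto. }
  assert (Hcov : forall z, exists p, U p z).
  { intros z. destruct (Hbad z) as [m Hm0].
    destruct (not_closed_ball _ _ _ _ (closed_all m) Hm0) as [e [He Hb]].
    exists (z, m, e). unfold U; simpl. rewrite d_refl. split; [auto|split; [|auto]].
    intros y' Hy'. apply Hb.
    - intros i Hi. rewrite d_refl. auto.
    - intros i Hi. destruct (Nat.eq_dec i k).
      + subst. rewrite !snoc_k. auto.
      + rewrite !snoc_lt by lia. rewrite d_refl. auto. }
  destruct (Hcomp _ U Hopen Hcov) as [l Hl].
  destruct (Ha (S (maxm l)) ) as [H1 _]. destruct (H1 x) as [y' Hy'].
  destruct (Hl y') as [p [Hin [Hp0 [Hpb Hpd]]]].
  apply (Hpb y' Hpd). apply (bf_mono_le _ (maxm l)); auto. apply maxm_le; auto.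
Qed.
End S.

Theorem mainTheorem6 (X : Type) (d : X -> X -> R) :
  is_metric d -> metric_compact d -> scott_rank_le_omega d.
Proof.
  intros Hm Hc. right. intros k a b H. split.
  - apply omega_forth; auto.
  - intros y. assert (H' : bf_equiv_omega d k b a) by (intro m; apply bf_sym; auto).
    destruct (omega_forth d Hm Hc k b a H' y) as [x Hx]. exists x.
    intro m. apply bf_sym; auto.
Qed.
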